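(* The category $\mathsf{SRng}$ of semirings is $S$-algebraically coherent, where $S$ is the class of Schreier split epimorphisms: for every semiring homomorphism $h\colon E\to B$, the change-of-base functor $h^*\colon SPt_B(\mathsf{SRng})\to SPt_E(\mathsf{SRng})$ sends jointly strongly epimorphic pairs to jointly strongly epimorphic pairs.
   Context: A semiring is a set with a commutative monoid structure $(+,0)$ and an associative (not necessarily unital) multiplication distributing over $+$ on both sides, with $0x=x0=0$. A point is a split epimorphism $f\colon A\to B$ with chosen section $s$; $Pt_B$ is the category of points over $B$ (morphisms commute with $f$, $s$ and are identity on $B$); for $h\colon E\to B$, $h^*$ pulls points back along $h$. A split epimorphism $(A,B,f,s)$ of semirings is Schreier if each $a\in A$ can be written uniquely as $a=\alpha+sf(a)$ with $f(\alpha)=0$. $SPt_B(\mathsf{SRng})$ is the full subcategory of $Pt_B(\mathsf{SRng})$ of Schreier points. In a category, a pair of morphisms $(f,g)$ with common codomain is jointly strongly epimorphic if whenever both $f$ and $g$ factor through a monomorphism $m$, $m$ is an isomorphism. *)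

(* Defs.v *)
From Stdlib Require Import Classical ProofIrrelevance.
Set Implicit Arguments.

Record semiring := Semiring {
  carrier :> Type;
  sadd : carrier -> carrier -> carrier;
  szero : carrier;
  smul : carrier -> carrier -> carrier;
  saddA : forall x y z, sadd x (sadd y z) = sadd (sadd x y) z;
  saddC : forall x y, sadd x y = sadd y x;
  sadd0 : forall x, sadd szero x = x;
  smulA : forall x y z, smul x (smul y z) = smul (smul x y) z;
  smulDl : forall x y z, smul (sadd x y) z = sadd (smul x z) (smul y z);
  smulDr : forall x y z, smul x (sadd y z) = sadd (smul x y) (smul x z);
  smul0l : forall x, smul szero x = szero;
  smul0r : forall x, smul x szero = szero
}.
Arguments sadd {s}.
Arguments szero {s}.
Arguments smul {s}.

Record srhom (A B : semiring) := SrHom {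
  hfun :> A -> B;
  hadd : forall x y, hfun (sadd x y) = sadd (hfun x) (hfun y);
  hzero : hfun szero = szero;
  hmul : forall x y, hfun (smul x y) = smul (hfun x) (hfun y)
}.

Record point (B : semiring) := Point {
  ptA : semiring;
  ptf : srhom ptA B;
  pts : srhom B ptA;
  pt_split : forall b, ptf (pts b) = b
}.

Definition schreier (B : semiring) (P : point B) : Prop :=
  forall a : ptA P,
    exists! alpha : ptA P,
      ptf P alpha = szero /\ a = sadd alpha (pts P (ptf P a)).

Record ptmor (B : semiring) (P Q : point B) := PtMor {
  pmfun :> srhom (ptA P) (ptA Q);
  pm_f : forall a, ptf Q (pmfun a) = ptf P a;
  pm_s : forall b, pmfun (pts P b) = pts Q b
}.

Definition ptmor_eq (B : semiring) (P Q : point B) (u v : ptmor P Q) : Prop :=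
  forall a, u a = v a.

Definition smono (B : semiring) (M X : point B) (m : ptmor M X) : Prop :=
  forall (Z : point B), schreier Z ->
  forall (u v : ptmor Z M),
    (forall z, m (u z) = m (v z)) -> ptmor_eq u v.

Definition siso (B : semiring) (M X : point B) (m : ptmor M X) : Prop :=
  exists n : ptmor X M,
    (forall x, m (n x) = x) /\ (forall y, n (m y) = y).

Definition factors_through (B : semiring) (Y M X : point B)
  (g : ptmor Y X) (m : ptmor M X) : Prop :=
  exists u : ptmor Y M, forall y, m (u y) = g y.

Definition jointly_strong_epi (B : semiring) (X1 X2 X : point B)
  (f : ptmor X1 X) (g : ptmor X2 X) : Prop :=
  forall (M : point B) (m : ptmor M X),
    schreier M -> smono m ->
    factors_through f m -> factors_through g m -> siso m.

Section Pullback.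
Variables (E B : semiring) (h : srhom E B) (P : point B).

Definition pb_car : Type := { p : E * ptA P | h (fst p) = ptf P (snd p) }.

Lemma pb_add_ok (x y : pb_car) :
  h (fst (sadd (fst (proj1_sig x)) (fst (proj1_sig y)),
          sadd (snd (proj1_sig x)) (snd (proj1_sig y))))
  = ptf P (snd (sadd (fst (proj1_sig x)) (fst (proj1_sig y)),
          sadd (snd (proj1_sig x)) (snd (proj1_sig y)))).
Proof.
  destruct x as [[e a] Hx], y as [[e' a'] Hy]; simpl in *.
  rewrite hadd, hadd, Hx, Hy; reflexivity.
Qed.

Definition pb_add (x y : pb_car) : pb_car :=
  exist _ (sadd (fst (proj1_sig x)) (fst (proj1_sig y)),
           sadd (snd (proj1_sig x)) (snd (proj1_sig y))) (pb_add_ok x y).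

Lemma pb_mul_ok (x y : pb_car) :
  h (fst (smul (fst (proj1_sig x)) (fst (proj1_sig y)),
          smul (snd (proj1_sig x)) (snd (proj1_sig y))))
  = ptf P (snd (smul (fst (proj1_sig x)) (fst (proj1_sig y)),
          smul (snd (proj1_sig x)) (snd (proj1_sig y)))).
Proof.
  destruct x as [[e a] Hx], y as [[e' a'] Hy]; simpl in *.
  rewrite hmul, hmul, Hx, Hy; reflexivity.
Qed.

Definition pb_mul (x y : pb_car) : pb_car :=
  exist _ (smul (fst (proj1_sig x)) (fst (proj1_sig y)),
           smul (snd (proj1_sig x)) (snd (proj1_sig y))) (pb_mul_ok x y).

Lemma pb_zero_ok : h (fst (@szero E, @szero (ptA P)))
                   = ptf P (snd (@szero E, @szero (ptA P))).
Proof. simpl; rewrite hzero, hzero; reflexivity. Qed.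

Definition pb_zero : pb_car := exist _ (szero, szero) pb_zero_ok.

Lemma pb_eq (x y : pb_car) : proj1_sig x = proj1_sig y -> x = y.
Proof.
  destruct x as [p Hp], y as [q Hq]; simpl; intros ->.
  f_equal; apply proof_irrelevance.
Qed.


Definition pb_semiring : semiring.
Proof.
  refine (@Semiring pb_car pb_add pb_zero pb_mul _ _ _ _ _ _ _ _).
  - intros [[a1 b1] H1] [[a2 b2] H2] [[a3 b3] H3]; apply pb_eq; simpl; f_equal; apply saddA.
  - intros [[a1 b1] H1] [[a2 b2] H2]; apply pb_eq; simpl; f_equal; apply saddC.
  - intros [[a1 b1] H1]; apply pb_eq; simpl; f_equal; apply sadd0.
  - intros [[a1 b1] H1] [[a2 b2] H2] [[a3 b3] H3]; apply pb_eq; simpl; f_equal; apply smulA.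
  - intros [[a1 b1] H1] [[a2 b2] H2] [[a3 b3] H3]; apply pb_eq; simpl; f_equal; apply smulDl.
  - intros [[a1 b1] H1] [[a2 b2] H2] [[a3 b3] H3]; apply pb_eq; simpl; f_equal; apply smulDr.
  - intros [[a1 b1] H1]; apply pb_eq; simpl; f_equal; apply smul0l.
  - intros [[a1 b1] H1]; apply pb_eq; simpl; f_equal; apply smul0r.
Defined.

Definition pb_f : srhom pb_semiring E.
Proof.
  refine (@SrHom pb_semiring E (fun x : pb_car => fst (proj1_sig x)) _ _ _);
    reflexivity.
Defined.

Lemma pb_s_ok (e : E) : h (fst (e, pts P (h e))) = ptf P (snd (e, pts P (h e))).
Proof. simpl; rewrite pt_split; reflexivity. Qed.

Definition pb_s_fun (e : E) : pb_semiring := exist _ (e, pts P (h e)) (pb_s_ok e).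

Definition pb_s : srhom E pb_semiring.
Proof.
  refine (@SrHom E pb_semiring pb_s_fun _ _ _); intros;
    apply pb_eq; simpl.
  - rewrite hadd, hadd; reflexivity.
  - rewrite hzero, hzero; reflexivity.
  - rewrite hmul, hmul; reflexivity.
Defined.

Definition pullback_point : point E :=
  @Point E pb_semiring pb_f pb_s (fun e => eq_refl).
End Pullback.

Section PullbackMor.
Variables (E B : semiring) (h : srhom E B) (P Q : point B) (phi : ptmor P Q).

Lemma pbm_ok (x : pb_car h P) :
  h (fst (fst (proj1_sig x), phi (snd (proj1_sig x))))
  = ptf Q (snd (fst (proj1_sig x), phi (snd (proj1_sig x)))).
Proof. destruct x as [[e a] H]; simpl in *; rewrite pm_f; exact H. Qed.

Definition pbm_fun (x : pb_car h P) : pb_car h Q :=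
  exist _ (fst (proj1_sig x), phi (snd (proj1_sig x))) (pbm_ok x).

Definition pbm_hom : srhom (ptA (pullback_point h P)) (ptA (pullback_point h Q)).
Proof.
  refine (@SrHom (pb_semiring h P) (pb_semiring h Q) pbm_fun _ _ _).
  - intros [[a1 b1] H1] [[a2 b2] H2]; apply pb_eq; simpl; rewrite hadd; reflexivity.
  - apply pb_eq; simpl; rewrite hzero; reflexivity.
  - intros [[a1 b1] H1] [[a2 b2] H2]; apply pb_eq; simpl; rewrite hmul; reflexivity.
Defined.

Definition pullback_mor : ptmor (pullback_point h P) (pullback_point h Q).
Proof.
  refine (@PtMor E (pullback_point h P) (pullback_point h Q) pbm_hom _ _).
  - intros; reflexivity.
  - intros e; apply pb_eq; simpl; rewrite pm_s; reflexivity.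
Defined.
End PullbackMor.

(* Main.v *)
Require Import Defs.
From Stdlib Require Import Classical ProofIrrelevance ClassicalEpsilon.

Lemma addr0 (R : semiring) (x : R) : sadd x szero = x.
Proof. rewrite saddC; apply sadd0. Qed.
Lemma addACA (R : semiring) (a b c d : R) :
  sadd (sadd a b) (sadd c d) = sadd (sadd a c) (sadd b d).
Proof. rewrite <- !saddA. f_equal. rewrite (saddA _ b c d), (saddC _ b c), <- saddA. reflexivity. Qed.

Section Inj.
Variables (E B : semiring) (h : srhom E B) (X : point B).
Hypothesis SX : schreier X.
Variables (M : point E) (m : ptmor M (pullback_point h X)).
Hypothesis SM : schreier M.
Hypothesis mono : smono m.

Lemma pb_prop (x : pb_car h X) : h (fst (proj1_sig x)) = ptf X (snd (proj1_sig x)).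
Proof. exact (proj2_sig x). Qed.

Lemma fM_eq (y1 y2 : ptA M) : m y1 = m y2 -> ptf M y1 = ptf M y2.
Proof. intro H. rewrite <- (pm_f m y1), <- (pm_f m y2), H. reflexivity. Qed.

Lemma kern_fst (a : ptA M) : ptf M a = szero -> fst (proj1_sig (m a : pb_car h X)) = szero.
Proof. intro H. rewrite <- H, <- (pm_f m a). reflexivity. Qed.

Lemma kern_part (y a : ptA M) : ptf M a = szero -> y = sadd a (pts M (ptf M y)) ->
  ptf X (snd (proj1_sig (m a : pb_car h X))) = szero /\
  snd (proj1_sig (m y : pb_car h X)) = sadd (snd (proj1_sig (m a : pb_car h X)))
      (pts X (ptf X (snd (proj1_sig (m y : pb_car h X))))).
Proof.
  intros Ha Ey.
  assert (F0 : ptf X (snd (proj1_sig (m a : pb_car h X))) = szero).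
  { transitivity (h (fst (proj1_sig (m a : pb_car h X)))); [symmetry; apply pb_prop|]. rewrite kern_fst by exact Ha. apply hzero. }
  split; [exact F0|].
  set (e := ptf M y) in Ey.
  assert (Hy : m y = sadd (m a) (m (pts M e))) by (rewrite Ey at 1; apply hadd).
  rewrite Hy, (pm_s m). clear Hy Ey. revert F0. generalize (m a). intros [[u v] Hp] F0. simpl in *. rewrite hadd, pt_split, F0, sadd0. reflexivity.
Qed.

Lemma kern_eq (y1 y2 a1 a2 : ptA M) : m y1 = m y2 ->
  ptf M a1 = szero -> y1 = sadd a1 (pts M (ptf M y1)) ->
  ptf M a2 = szero -> y2 = sadd a2 (pts M (ptf M y2)) -> m a1 = m a2.
Proof.
  intros H H1 E1 H2 E2.
  destruct (kern_part _ _ H1 E1) as [F1 D1]. destruct (kern_part _ _ H2 E2) as [F2 D2].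
  rewrite H in D1.
  destruct (SX (snd (proj1_sig (m y2 : pb_car h X)))) as [al [_ U]].
  assert (snd (proj1_sig (m a1 : pb_car h X)) = snd (proj1_sig (m a2 : pb_car h X))).
  { rewrite <- (U _ (conj F1 D1)). apply U. auto. }
  pose proof (kern_fst _ H1) as K1. pose proof (kern_fst _ H2) as K2.
  clear -H0 K1 K2. revert H0 K1 K2. generalize (m a1) (m a2).
  intros [[u1 v1] P1] [[u2 v2] P2]. simpl. intros; apply pb_eq; simpl; congruence.
Qed.

Definition Zp (q : ptA M * ptA M) : Prop := m (fst q) = m (snd q).
Definition Zcar := { q : ptA M * ptA M | Zp q }.
Lemma Z_eq (x y : Zcar) : proj1_sig x = proj1_sig y -> x = y.
Proof. destruct x as [p Hp], y as [q Hq]; simpl; intros ->. f_equal; apply proof_irrelevance. Qed.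

Lemma Zp_add (x y : Zcar) : Zp (sadd (fst (proj1_sig x)) (fst (proj1_sig y)), sadd (snd (proj1_sig x)) (snd (proj1_sig y))).
Proof. destruct x as [[a b] Hx], y as [[c d] Hy]; unfold Zp in *; simpl in *. rewrite !hadd, Hx, Hy. reflexivity. Qed.
Lemma Zp_mul (x y : Zcar) : Zp (smul (fst (proj1_sig x)) (fst (proj1_sig y)), smul (snd (proj1_sig x)) (snd (proj1_sig y))).
Proof. destruct x as [[a b] Hx], y as [[c d] Hy]; unfold Zp in *; simpl in *. rewrite !hmul, Hx, Hy. reflexivity. Qed.
Lemma Zp_zero : Zp (szero, szero).
Proof. reflexivity. Qed.

Definition Zadd (x y : Zcar) : Zcar := exist _ _ (Zp_add x y).
Definition Zmul (x y : Zcar) : Zcar := exist _ _ (Zp_mul x y).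
Definition Zzero : Zcar := exist _ _ Zp_zero.

Definition Zsemi : semiring.
Proof.
  refine (@Semiring Zcar Zadd Zzero Zmul _ _ _ _ _ _ _ _).
  - intros [[a1 b1] H1] [[a2 b2] H2] [[a3 b3] H3]; apply Z_eq; simpl; f_equal; apply saddA.
  - intros [[a1 b1] H1] [[a2 b2] H2]; apply Z_eq; simpl; f_equal; apply saddC.
  - intros [[a1 b1] H1]; apply Z_eq; simpl; f_equal; apply sadd0.
  - intros [[a1 b1] H1] [[a2 b2] H2] [[a3 b3] H3]; apply Z_eq; simpl; f_equal; apply smulA.
  - intros [[a1 b1] H1] [[a2 b2] H2] [[a3 b3] H3]; apply Z_eq; simpl; f_equal; apply smulDl.
  - intros [[a1 b1] H1] [[a2 b2] H2] [[a3 b3] H3]; apply Z_eq; simpl; f_equal; apply smulDr.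
  - intros [[a1 b1] H1]; apply Z_eq; simpl; f_equal; apply smul0l.
  - intros [[a1 b1] H1]; apply Z_eq; simpl; f_equal; apply smul0r.
Defined.

Definition Zf : srhom Zsemi E.
Proof.
  refine (@SrHom Zsemi E (fun x : Zcar => ptf M (fst (proj1_sig x))) _ _ _).
  - intros [[a b] Ha] [[c d] Hc]; simpl; apply hadd.
  - apply hzero.
  - intros [[a b] Ha] [[c d] Hc]; simpl; apply hmul.
Defined.

Lemma Zs_ok (e : E) : Zp (pts M e, pts M e).
Proof. reflexivity. Qed.

Definition Zs : srhom E Zsemi.
Proof.
  refine (@SrHom E Zsemi (fun e => exist _ _ (Zs_ok e)) _ _ _); intros; apply Z_eq; simpl.
  - rewrite hadd; reflexivity.
  - rewrite hzero; reflexivity.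
  - rewrite hmul; reflexivity.
Defined.

Definition Zpoint : point E := @Point E Zsemi Zf Zs (fun e => pt_split M e).

Lemma Z_schreier : schreier Zpoint.
Proof.
  intros [[y1 y2] H]. unfold Zp in H; simpl in H.
  pose proof (fM_eq _ _ H) as Hf.
  destruct (SM y1) as [a1 [[Ha1 Ea1] U1]].
  destruct (SM y2) as [a2 [[Ha2 Ea2] U2]].
  assert (Ha : Zp (a1, a2)) by (exact (kern_eq _ _ _ _ H Ha1 Ea1 Ha2 Ea2)).
  exists (exist _ _ Ha). split.
  - split; [exact Ha1|]. apply Z_eq; simpl. f_equal; [exact Ea1| rewrite Hf; exact Ea2].
  - intros [[b1 b2] Hb] [Hb1 Eb]. unfold Zp in Hb; simpl in *.
    apply Z_eq; simpl. apply (f_equal (@proj1_sig _ _)) in Eb. simpl in Eb.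
    injection Eb; intros Eb2 Eb1.
    pose proof (fM_eq _ _ Hb) as Hbf.
    f_equal.
    + apply U1. split; assumption.
    + apply U2. split; [congruence|]. rewrite <- Hf. exact Eb2.
Qed.

Definition pi1h : srhom Zsemi (ptA M).
Proof. refine (@SrHom Zsemi (ptA M) (fun x : Zcar => fst (proj1_sig x)) _ _ _); reflexivity. Defined.
Definition pi2h : srhom Zsemi (ptA M).
Proof. refine (@SrHom Zsemi (ptA M) (fun x : Zcar => snd (proj1_sig x)) _ _ _); reflexivity. Defined.

Definition pi1 : ptmor Zpoint M.
Proof. refine (@PtMor E Zpoint M pi1h _ _); reflexivity. Defined.
Definition pi2 : ptmor Zpoint M.
Proof.
  refine (@PtMor E Zpoint M pi2h _ _); [|reflexivity].
  intros [[a b] H]; simpl. symmetry; apply fM_eq; exact H.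
Defined.

Lemma m_inj (y1 y2 : ptA M) : m y1 = m y2 -> y1 = y2.
Proof.
  intro H.
  exact (mono Zpoint Z_schreier pi1 pi2 (fun z => proj2_sig z) (exist _ (y1, y2) H)).
Qed.
End Inj.
Set Implicit Arguments.

Definition mulL (B : semiring) (P : point B) (o : option B) (a : ptA P) : ptA P :=
  match o with None => a | Some b => smul (pts P b) a end.
Definition mulR (B : semiring) (P : point B) (a : ptA P) (o : option B) : ptA P :=
  match o with None => a | Some b => smul a (pts P b) end.
Definition comb (B : semiring) (b : B) (o : option B) : B :=
  match o with None => b | Some b' => smul b b' end.
Definition combL (B : semiring) (o : option B) (b : B) : B :=
  match o with None => b | Some b' => smul b' b end.

Arguments mulL {B P}.
Arguments comb {B}.
Arguments combL {B}.
Arguments mulR {B P}.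
Section Sub.
Variables (E B : semiring) (h : srhom E B) (X : point B).
Hypothesis SX : schreier X.
Variables (M : point E) (m : ptmor M (pullback_point h X)).

Definition inIm (k : ptA X) : Prop :=
  exists y : ptA M, proj1_sig (m y : pb_car h X) = (szero, k).

Lemma inIm_add a c : inIm a -> inIm c -> inIm (sadd a c).
Proof.
  intros [y1 H1] [y2 H2]. exists (sadd y1 y2). rewrite hadd.
  revert H1 H2. generalize (m y1) (m y2). intros [[u1 v1] P1] [[u2 v2] P2]. simpl.
  intros H1 H2; injection H1; injection H2; intros; subst. rewrite sadd0. reflexivity.
Qed.

Lemma inIm_mul a c : inIm a -> inIm c -> inIm (smul a c).
Proof.
  intros [y1 H1] [y2 H2]. exists (smul y1 y2). rewrite hmul.
  revert H1 H2. generalize (m y1) (m y2). intros [[u1 v1] P1] [[u2 v2] P2]. simpl.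
  intros H1 H2; injection H1; injection H2; intros; subst. rewrite smul0l. reflexivity.
Qed.

Lemma inIm_zero : inIm szero.
Proof. exists szero. rewrite hzero. reflexivity. Qed.

Definition Tstar (k : ptA X) : Prop := forall o1 o2, inIm (mulR (mulL o1 k) o2).

Lemma Tstar_zero : Tstar szero.
Proof. intros [b1|] [b2|]; simpl; rewrite ?smul0r, ?smul0l; apply inIm_zero. Qed.

Lemma Tstar_add a c : Tstar a -> Tstar c -> Tstar (sadd a c).
Proof.
  intros Ha Hc o1 o2.
  replace (mulR (mulL o1 (sadd a c)) o2) with (sadd (mulR (mulL o1 a) o2) (mulR (mulL o1 c) o2)).
  - apply inIm_add; auto.
  - destruct o1, o2; simpl; rewrite ?smulDr, ?smulDl; reflexivity.
Qed.

Lemma Tstar_mul a c : Tstar a -> Tstar c -> Tstar (smul a c).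
Proof.
  intros Ha Hc o1 o2.
  replace (mulR (mulL o1 (smul a c)) o2) with (smul (mulL o1 a) (mulR c o2)).
  - apply inIm_mul; [apply (Ha o1 None)|apply (Hc None o2)].
  - destruct o1, o2; simpl; rewrite ?smulA; reflexivity.
Qed.

Lemma Tstar_mulR a b : Tstar a -> Tstar (smul a (pts X b)).
Proof.
  intros Ha o1 o2.
  replace (mulR (mulL o1 (smul a (pts X b))) o2) with (mulR (mulL o1 a) (Some (comb b o2))).
  - apply Ha.
  - destruct o1, o2; simpl; rewrite ?hmul, ?smulA; reflexivity.
Qed.

Lemma Tstar_mulL a b : Tstar a -> Tstar (smul (pts X b) a).
Proof.
  intros Ha o1 o2.
  replace (mulR (mulL o1 (smul (pts X b) a)) o2) with (mulR (mulL (Some (combL o1 b)) a) o2).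
  - apply Ha.
  - destruct o1, o2; simpl; rewrite ?hmul, ?smulA; reflexivity.
Qed.

Lemma Tstar_phi (Y : point B) (phi : ptmor Y X) :
  factors_through (pullback_mor h phi) m ->
  forall k, ptf Y k = szero -> Tstar (phi k).
Proof.
  intros [u Hu] k Hk o1 o2.
  set (k' := mulR (mulL o1 k) o2).
  assert (Hk' : ptf Y k' = szero).
  { unfold k'; destruct o1, o2; simpl; rewrite ?hmul, Hk, ?smul0r, ?smul0l; reflexivity. }
  replace (mulR (mulL o1 (phi k)) o2) with (phi k').
  2:{ unfold k'; destruct o1, o2; simpl; rewrite ?hmul, ?pm_s; reflexivity. }
  assert (Pk : h (fst (@szero E, k')) = ptf Y (snd (@szero E, k'))).
  { simpl. rewrite hzero, Hk'. reflexivity. }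
  exists (u (exist _ _ Pk : pb_car h Y)). rewrite Hu. reflexivity.
Qed.

End Sub.

Section Msub.
Variables (E B : semiring) (h : srhom E B) (X : point B).
Hypothesis SX : schreier X.
Variables (M : point E) (m : ptmor M (pullback_point h X)).

Definition Mp (x : ptA X) : Prop :=
  exists k, ptf X k = szero /\ x = sadd k (pts X (ptf X x)) /\ Tstar m k.

Lemma Mp_zero : Mp szero.
Proof.
  exists szero. split; [apply hzero|]. split; [|apply Tstar_zero].
  rewrite !hzero, sadd0. reflexivity.
Qed.

Lemma Mp_s b : Mp (pts X b).
Proof.
  exists szero. split; [apply hzero|]. split; [|apply Tstar_zero].
  rewrite pt_split, sadd0. reflexivity.
Qed.

Lemma Mp_add x1 x2 : Mp x1 -> Mp x2 -> Mp (sadd x1 x2).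
Proof.
  intros [k1 [F1 [E1 T1]]] [k2 [F2 [E2 T2]]].
  exists (sadd k1 k2). split; [rewrite hadd, F1, F2; apply sadd0|].
  split; [|apply Tstar_add; auto].
  transitivity (sadd (sadd k1 (pts X (ptf X x1))) (sadd k2 (pts X (ptf X x2)))).
  - rewrite <- E1, <- E2. reflexivity.
  - rewrite (hadd (ptf X)), (hadd (pts X)), addACA. reflexivity.
Qed.

Lemma Mp_mul x1 x2 : Mp x1 -> Mp x2 -> Mp (smul x1 x2).
Proof.
  intros [k1 [F1 [E1 T1]]] [k2 [F2 [E2 T2]]].
  set (b1 := ptf X x1) in *. set (b2 := ptf X x2) in *.
  exists (sadd (sadd (smul k1 k2) (smul k1 (pts X b2))) (smul (pts X b1) k2)).
  split.
  { rewrite !hadd, !hmul, F1, F2, !pt_split, !smul0l, !smul0r, !sadd0. reflexivity. }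
  split.
  2:{ apply Tstar_add; [apply Tstar_add|].
      - apply Tstar_mul; auto.
      - apply Tstar_mulR; auto.
      - apply Tstar_mulL; auto. }
  transitivity (smul (sadd k1 (pts X b1)) (sadd k2 (pts X b2))).
  - rewrite <- E1, <- E2. reflexivity.
  - rewrite (hmul (ptf X)). fold b1 b2. rewrite (hmul (pts X)).
    rewrite smulDl, !smulDr, !saddA. reflexivity.
Qed.

Lemma Mp_phi (Y : point B) (SY : schreier Y) (phi : ptmor Y X) :
  factors_through (pullback_mor h phi) m -> forall y, Mp (phi y).
Proof.
  intros Hf y. destruct (SY y) as [a [[Ha Ea] _]].
  exists (phi a). split; [rewrite pm_f; exact Ha|]. split; [|apply Tstar_phi; auto].
  rewrite pm_f. transitivity (phi (sadd a (pts Y (ptf Y y)))).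
  - f_equal; exact Ea.
  - rewrite hadd, pm_s. reflexivity.
Qed.

Definition Mcar := { x : ptA X | Mp x }.
Lemma M_eq (x y : Mcar) : proj1_sig x = proj1_sig y -> x = y.
Proof. destruct x as [p Hp], y as [q Hq]; simpl; intros ->. f_equal; apply proof_irrelevance. Qed.

Definition Madd (x y : Mcar) : Mcar := exist _ _ (Mp_add (proj2_sig x) (proj2_sig y)).
Definition Mmul (x y : Mcar) : Mcar := exist _ _ (Mp_mul (proj2_sig x) (proj2_sig y)).
Definition Mzero : Mcar := exist _ _ Mp_zero.

Definition Msemi : semiring.
Proof.
  refine (@Semiring Mcar Madd Mzero Mmul _ _ _ _ _ _ _ _).
  - intros [a1 H1] [a2 H2] [a3 H3]; apply M_eq; simpl; apply saddA.
  - intros [a1 H1] [a2 H2]; apply M_eq; simpl; apply saddC.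
  - intros [a1 H1]; apply M_eq; simpl; apply sadd0.
  - intros [a1 H1] [a2 H2] [a3 H3]; apply M_eq; simpl; apply smulA.
  - intros [a1 H1] [a2 H2] [a3 H3]; apply M_eq; simpl; apply smulDl.
  - intros [a1 H1] [a2 H2] [a3 H3]; apply M_eq; simpl; apply smulDr.
  - intros [a1 H1]; apply M_eq; simpl; apply smul0l.
  - intros [a1 H1]; apply M_eq; simpl; apply smul0r.
Defined.

Definition Mincl : srhom Msemi (ptA X).
Proof. refine (@SrHom Msemi (ptA X) (fun x : Mcar => proj1_sig x) _ _ _); reflexivity. Defined.

Definition Mf : srhom Msemi B.
Proof.
  refine (@SrHom Msemi B (fun x : Mcar => ptf X (proj1_sig x)) _ _ _).
  - intros [a Ha] [c Hc]; simpl; apply hadd.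
  - apply hzero.
  - intros [a Ha] [c Hc]; simpl; apply hmul.
Defined.

Definition Ms : srhom B Msemi.
Proof.
  refine (@SrHom B Msemi (fun b => exist _ _ (Mp_s b)) _ _ _); intros; apply M_eq; simpl.
  - apply hadd.
  - apply hzero.
  - apply hmul.
Defined.

Definition Mpoint : point B := @Point B Msemi Mf Ms (fun b => pt_split X b).

Lemma M_schreier : schreier Mpoint.
Proof.
  intros [x [k [Fk [Ek Tk]]]].
  assert (Pk : Mp k).
  { exists k. split; [exact Fk|]. split; [|exact Tk]. rewrite Fk, hzero, addr0. reflexivity. }
  destruct (SX x) as [al [_ U]].
  exists (exist _ _ Pk). split.
  - split; [exact Fk|]. apply M_eq. simpl. exact Ek.
  - intros [c Pc] [Fc Ec]. apply (f_equal (@proj1_sig _ _)) in Ec. simpl in *.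
    apply M_eq; simpl. rewrite <- (U k (conj Fk Ek)). apply U. split; auto.
Qed.

Definition Mmor : ptmor Mpoint X.
Proof. refine (@PtMor B Mpoint X Mincl _ _); reflexivity. Defined.

Lemma M_mono : smono Mmor.
Proof. intros Z _ u v H z. apply M_eq. apply H. Qed.

Definition Mfac_h (Y : point B) (SY : schreier Y) (phi : ptmor Y X)
  (Hf : factors_through (pullback_mor h phi) m) : srhom (ptA Y) Msemi.
Proof.
  refine (@SrHom (ptA Y) Msemi (fun y => exist _ _ (Mp_phi SY Hf y)) _ _ _);
    intros; apply M_eq; simpl; auto using hadd, hzero, hmul.
Defined.

Definition Mfac (Y : point B) (SY : schreier Y) (phi : ptmor Y X)
  (Hf : factors_through (pullback_mor h phi) m) : ptmor Y Mpoint.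
Proof.
  refine (@PtMor B Y Mpoint (Mfac_h SY Hf) _ _).
  - intros a; simpl. apply pm_f.
  - intros b; apply M_eq; simpl. apply pm_s.
Defined.

Lemma M_factors (Y : point B) (SY : schreier Y) (phi : ptmor Y X) :
  factors_through (pullback_mor h phi) m -> factors_through phi Mmor.
Proof. intros Hf. exists (Mfac SY Hf). intros y. reflexivity. Qed.

End Msub.

Section Final.
Variables (E B : semiring) (h : srhom E B) (X : point B).
Hypothesis SX : schreier X.
Variables (M : point E) (m : ptmor M (pullback_point h X)).
Hypothesis SM : schreier M.
Hypothesis mono : smono m.
Hypothesis allMp : forall x, Mp m x.

Lemma m_surj (p : pb_car h X) : exists y, m y = p.
Proof.
  destruct p as [[e x] Hp]. simpl in Hp.
  destruct (allMp x) as [k [Fk [Ek Tk]]].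
  destruct (Tk None None) as [y0 H0]. simpl in H0.
  exists (sadd y0 (pts M e)). rewrite hadd, (pm_s m).
  apply pb_eq. simpl. rewrite H0. simpl. rewrite sadd0, Hp, <- Ek. reflexivity.

Qed.

Definition ninv (p : pb_car h X) : ptA M :=
  proj1_sig (constructive_indefinite_description _ (m_surj p)).
Lemma ninv_spec p : m (ninv p) = p.
Proof. unfold ninv. destruct (constructive_indefinite_description _ _); assumption. Qed.

Lemma minj : forall y1 y2, m y1 = m y2 -> y1 = y2.
Proof. intros y1 y2 H. exact (@m_inj E B h X SX M m SM mono y1 y2 H). Qed.

Definition ninv_h : srhom (ptA (pullback_point h X)) (ptA M).
Proof.
  refine (@SrHom (ptA (pullback_point h X)) (ptA M) ninv _ _ _); intros; apply minj.
  - rewrite hadd, !ninv_spec. reflexivity.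
  - rewrite hzero, !ninv_spec. reflexivity.
  - rewrite hmul, !ninv_spec. reflexivity.
Defined.

Definition ninv_m : ptmor (pullback_point h X) M.
Proof.
  refine (@PtMor E (pullback_point h X) M ninv_h _ _).
  - intros a. simpl. rewrite <- (pm_f m (ninv a)), ninv_spec. reflexivity.
  - intros b. simpl. apply minj. rewrite ninv_spec, (pm_s m). reflexivity.
Defined.

Lemma final_siso : siso m.
Proof.
  exists ninv_m. split.
  - intros x. apply ninv_spec.
  - intros y. apply minj. apply ninv_spec.
Qed.
End Final.

Theorem mainTheorem5 :
  forall (E B : semiring) (h : srhom E B)
         (X1 X2 X : point B),
    schreier X1 -> schreier X2 -> schreier X ->
    forall (f : ptmor X1 X) (g : ptmor X2 X),
      jointly_strong_epi f g ->
      jointly_strong_epi (pullback_mor h f) (pullback_mor h g).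
Proof.
  intros E B h X1 X2 X S1 S2 SX f g J M m SM mono ff fg.
  assert (All : forall x, Mp m x).
  { destruct (J _ (Mmor m) (@M_schreier _ _ _ _ SX _ m) (@M_mono _ _ _ _ _ m)
       (M_factors S1 ff) (M_factors S2 fg)) as [n [Hn _]].
    intro x. rewrite <- (Hn x). exact (proj2_sig (n x)). }
  exact (final_siso SX SM mono All).
Qed.
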